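(* Let $T$ be a monad on $\mathbf{Set}$. The adjunction $\mathcal{O}\dashv\mathrm{pt}$ between $\mathbf{Top}$ and $\mathbf{Loc}$ lifts to an adjunction $\mathcal{O}\dashv\mathrm{pt}$ between the category $\mathrm{Comod}_T(\mathbf{Top})$ of $T$-comodels in $\mathbf{Top}$ and the category $\mathrm{Comod}_T(\mathbf{Loc})$ of $T$-comodels in $\mathbf{Loc}$.
   Context: A monad $T$ on $\mathbf{Set}$: sets $TA$, $\mathrm{return}\,a\in TA$, $\mathbin{\gg\!=}\colon TA\times(TB)^A\to TB$ with the monad laws. A $T$-comodel in a category with copowers ($A\cdot C$ the $A$-fold coproduct of $C$, injections $\upsilon_a$) is an object $W$ with maps $[\![t]\!]\colon W\to A\cdot W$ for all $t\in TA$, such that $[\![\mathrm{return}\,a]\!]=\upsilon_a$ and $[\![t\mathbin{\gg\!=}u]\!]=[[\![u(a)]\!]]_{a\in A}\circ[\![t]\!]$; a comodel map is $h\colon W\to W'$ with $[\![t]\!]\circ h=(A\cdot h)\circ[\![t]\!]$. $\mathbf{Loc}$ is the opposite of the category of frames; $\mathcal{O}\colon\mathbf{Top}\to\mathbf{Loc}$ sends a space to its frame of open sets and $\mathrm{pt}\colon\mathbf{Loc}\to\mathbf{Top}$ sends a locale to its space of points (frame maps $\mathcal{O}(L)\to\{\bot,\top\}$ with opens $\{x:x^{-1}(u)=\top\}$), and $\mathcal{O}\dashv\mathrm{pt}$. Lifting means that applying $\mathcal{O}$ and $\mathrm{pt}$ to comodels (using the induced maps on copowers) yields functors between the comodel categories,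 adjoint to each other, commuting with the forgetful functors to $\mathbf{Top}$ and $\mathbf{Loc}$. *)

(* Defs.v *)
From Stdlib Require Import ClassicalEpsilon.

Record Monad := {
  M :> Type -> Type;
  ret : forall A : Type, A -> M A;
  bind : forall A B : Type, M A -> (A -> M B) -> M B;
  bind_ret_l : forall A B (a : A) (f : A -> M B), bind A B (ret A a) f = f a;
  bind_ret_r : forall A (t : M A), bind A A t (ret A) = t;
  bind_assoc : forall A B C (t : M A) (f : A -> M B) (g : B -> M C),
      bind B C (bind A B t f) g = bind A C t (fun a => bind B C (f a) g)
}.
Arguments ret m {A} a.
Arguments bind m {A B} t f.

Set Implicit Arguments.
Unset Strict Implicit.

Record Space := {
  pts :> Type;
  isOpen : (pts -> Prop) -> Prop;
  open_true : isOpen (fun _ => True);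
  open_and : forall U V, isOpen U -> isOpen V -> isOpen (fun x => U x /\ V x);
  open_ex : forall (I : Type) (U : I -> pts -> Prop),
      (forall i, isOpen (U i)) -> isOpen (fun x => exists i, U i x)
}.

Arguments isOpen s U : clear implicits.
Arguments open_true s : clear implicits.

Definition continuous (X Y : Space) (f : X -> Y) : Prop :=
  forall U, isOpen Y U -> isOpen X (fun x => U (f x)).

Definition cmap (X Y : Space) := {f : X -> Y | continuous f}.

(* copower A . X in Top: A x X with A discrete (the A-fold coproduct);
   injection upsilon_a is x |-> (a, x). *)
Definition copow (A : Type) (X : Space) : Space.
Proof.
  refine {| pts := (A * pts X)%type;
            isOpen := fun U => forall a, isOpen X (fun x => U (a, x)) |}.
  - intros a; apply open_true.
  - intros U V HU HV a; apply open_and; auto.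
  - intros I U HU a. apply (@open_ex X I (fun i x => U i (a, x))). intro i; apply HU.
Defined.

Definition TopOps (T : Monad) (X : Space) := forall A : Type, T A -> cmap X (copow A X).

Definition is_top_comodel (T : Monad) (X : Space) (op : TopOps T X) : Prop :=
  (forall (A : Type) (a : A) (x : X), proj1_sig (op A (ret T a)) x = (a, x)) /\
  (forall (A B : Type) (t : T A) (u : A -> T B) (x : X),
     proj1_sig (op B (bind T t u)) x =
     proj1_sig (op B (u (fst (proj1_sig (op A t) x)))) (snd (proj1_sig (op A t) x))).

Definition is_top_comodel_map (T : Monad) (X Y : Space) (opX : TopOps T X)
  (opY : TopOps T Y) (h : X -> Y) : Prop :=
  continuous h /\
  forall (A : Type) (t : T A) (x : X),
    proj1_sig (opY A t) (h x) =
    (fst (proj1_sig (opX A t) x), h (snd (proj1_sig (opX A t) x))).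

(* ---------- Frames (Loc = Frm^op) ---------- *)
Record RawFrame := {
  fcar :> Type;
  fle : fcar -> fcar -> Prop;
  ftop : fcar;
  fmeet : fcar -> fcar -> fcar;
  fjoin : forall I : Type, (I -> fcar) -> fcar
}.
Arguments fle {r} _ _.
Arguments ftop {r}.
Arguments fmeet {r} _ _.
Arguments fjoin {r} I _.

Definition is_frame (L : RawFrame) : Prop :=
  (forall x : L, fle x x) /\
  (forall x y z : L, fle x y -> fle y z -> fle x z) /\
  (forall x y : L, fle x y -> fle y x -> x = y) /\
  (forall x : L, fle x ftop) /\
  (forall x y z : L, fle z (fmeet x y) <-> (fle z x /\ fle z y)) /\
  (forall (I : Type) (f : I -> L) (z : L), fle (fjoin I f) z <-> (forall i, fle (f i) z)) /\
  (forall (x : L) (I : Type) (f : I -> L), fmeet x (fjoin I f) = fjoin I (fun i => fmeet x (f i))).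

Definition frame_hom (L K : RawFrame) (h : L -> K) : Prop :=
  h ftop = ftop /\
  (forall x y : L, h (fmeet x y) = fmeet (h x) (h y)) /\
  (forall (I : Type) (f : I -> L), h (fjoin I f) = fjoin I (fun i => h (f i))).

Lemma frame_hom_comp (K L N : RawFrame) (f : K -> L) (g : L -> N) :
  frame_hom f -> frame_hom g -> frame_hom (fun x => g (f x)).
Proof.
  intros [f1 [f2 f3]] [g1 [g2 g3]]. split; [|split].
  - rewrite f1; exact g1.
  - intros x y; rewrite f2; apply g2.
  - intros I F; rewrite f3; apply g3.
Qed.

(* The frame of the copower A . L in Loc is the product frame L^A. *)
Definition fpow (A : Type) (L : RawFrame) : RawFrame := {|
  fcar := A -> L;
  fle := fun f g => forall a, fle (f a) (g a);
  ftop := fun _ => ftop;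
  fmeet := fun f g a => fmeet (f a) (g a);
  fjoin := fun I F a => fjoin I (fun i => F i a) |}.

(* ---------- T-comodels in Loc, written on frames ----------
   A locale map [[t]] : W -> A . W is a frame hom [[t]]^* : W^A -> W.
   upsilon_a^* is evaluation at a; the copairing [f_a]_a has
   [f_a]^* psi = (a |-> f_a^* psi). *)
Definition LocOps (T : Monad) (L : RawFrame) := forall A : Type, T A -> (A -> L) -> L.

Definition is_loc_comodel (T : Monad) (L : RawFrame) (op : LocOps T L) : Prop :=
  is_frame L /\
  (forall (A : Type) (t : T A), @frame_hom (fpow A L) L (op A t)) /\
  (forall (A : Type) (a : A) (phi : A -> L), op A (ret T a) phi = phi a) /\
  (forall (A B : Type) (t : T A) (u : A -> T B) (phi : B -> L),
     op B (bind T t u) phi = op A t (fun a => op B (u a) phi)).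

(* A comodel map of locales W -> W' is given by its frame hom h : W' -> W;
   [[t]] o h = (A . h) o [[t]] reads  h o [[t]]'^* = [[t]]^* o (h o -). *)
Definition is_loc_comodel_map (T : Monad) (L L' : RawFrame) (op : LocOps T L)
  (op' : LocOps T L') (h : L' -> L) : Prop :=
  frame_hom h /\
  forall (A : Type) (t : T A) (phi : A -> L'), h (op' A t phi) = op A t (fun a => h (phi a)).

Definition Opens (X : Space) : RawFrame := {|
  fcar := {U : X -> Prop | isOpen X U};
  fle := fun U V => forall x, proj1_sig U x -> proj1_sig V x;
  ftop := exist _ (fun _ => True) (open_true X);
  fmeet := fun U V => exist _ (fun x => proj1_sig U x /\ proj1_sig V x)
                        (open_and (proj2_sig U) (proj2_sig V));
  fjoin := fun I F => exist _ (fun x => exists i, proj1_sig (F i) x)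
                        (@open_ex X I (fun i => proj1_sig (F i)) (fun i => proj2_sig (F i))) |}.

Definition Opre (X Y : Space) (f : cmap X Y) (U : Opens Y) : Opens X :=
  exist _ (fun x => proj1_sig U (proj1_sig f x)) (proj2_sig f _ (proj2_sig U)).

(* inverse of the canonical comparison A . O(X) -> O(A . X) in Loc,
   as a frame map O(X)^A -> O(A . X) *)
Definition glue (A : Type) (X : Space) (phi : A -> Opens X) : Opens (copow A X) :=
  exist (fun U : copow A X -> Prop => isOpen (copow A X) U)
    (fun ax => proj1_sig (phi (fst ax)) (snd ax)) (fun a => proj2_sig (phi a)).

(* induced comodel structure on O(W): O(A . W) ~ A . O(W) composed with O[[t]] *)
Definition O_ops (T : Monad) (X : Space) (op : TopOps T X) : LocOps T (Opens X) :=
  fun A t phi => Opre (op A t) (glue phi).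

(* the frame {bot, top}, realised (classically) as Prop *)
Definition PropFrame : RawFrame := {|
  fcar := Prop;
  fle := fun P Q => P -> Q;
  ftop := True;
  fmeet := and;
  fjoin := fun I f => exists i, f i |}.

Definition point (L : RawFrame) := {p : L -> PropFrame | frame_hom p}.

Definition pt (L : RawFrame) : Space.
Proof.
  refine {| pts := point L;
            isOpen := fun U => exists u : L, forall p : point L, U p <-> proj1_sig p u |}.
  - exists ftop. intros p. destruct (proj2_sig p) as [Ht _]. rewrite Ht. simpl. tauto.
  - intros U V [u Hu] [v Hv]. exists (fmeet u v). intros p.
    destruct (proj2_sig p) as [_ [Hm _]]. rewrite Hm. simpl.
    specialize (Hu p); specialize (Hv p). tauto.
  - intros I U HU.
    exists (fjoin I (fun i => proj1_sig (constructive_indefinite_description _ (HU i)))).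
    intros p. destruct (proj2_sig p) as [_ [_ Hj]]. rewrite Hj. simpl. split.
    + intros [i Hi]. exists i.
      pose proof (proj2_sig (constructive_indefinite_description _ (HU i))) as Hu.
      exact (proj1 (Hu p) Hi).
    + intros [i Hi]. exists i.
      pose proof (proj2_sig (constructive_indefinite_description _ (HU i))) as Hu.
      exact (proj2 (Hu p) Hi).
Defined.

(* pt on a locale map L -> L' given by the frame hom h : L' -> L *)
Definition ptmap (L L' : RawFrame) (h : L' -> L) (Hh : frame_hom h) (p : pt L) : pt L' :=
  exist _ (fun u => proj1_sig p (h u)) (frame_hom_comp Hh (proj2_sig p)).

(* A Top-structure on pt(W) is the one induced by pt([[t]]) via the
   canonical comparison c : A . pt(W) -> pt(A . W), c(a,q) = (phi |-> q (phi a)),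
   i.e. c o [[t]]_{pt W} = pt([[t]]). *)
Definition pt_compatible (T : Monad) (L : RawFrame) (lop : LocOps T L)
  (pop : TopOps T (pt L)) : Prop :=
  forall (A : Type) (t : T A) (p : point L) (phi : A -> L),
    proj1_sig (snd (proj1_sig (pop A t) p)) (phi (fst (proj1_sig (pop A t) p)))
    <-> proj1_sig p (lop A t phi).

(* ---------- transpose for O -| pt ----------
   a continuous f : X -> pt L corresponds to the frame hom L -> O(X),
   u |-> {x | f x u}. *)
Definition transpose (X : Space) (L : RawFrame) (f : cmap X (pt L)) (u : L) : Opens X :=
  exist _ (fun x => proj1_sig (proj1_sig f x) u)
    (proj2_sig f (fun p : point L => proj1_sig p u)
       (ex_intro _ u (fun p : point L => iff_refl (proj1_sig p u)))).

(* Main.v *)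
Require Import Defs.
From Stdlib Require Import FunctionalExtensionality PropExtensionality ProofIrrelevance Classical ClassicalEpsilon.
Set Implicit Arguments.

Lemma opens_ext (X : Space) (U V : {U : X -> Prop | isOpen X U}) :
  (forall x, proj1_sig U x <-> proj1_sig V x) -> U = V.
Proof.
  destruct U as [U HU], V as [V HV]; simpl; intros H.
  assert (U = V) by (apply functional_extensionality; intro x; apply propositional_extensionality; auto).
  subst. f_equal. apply proof_irrelevance.
Qed.

Lemma point_ext (L : RawFrame) (p q : point L) :
  (forall u, proj1_sig p u <-> proj1_sig q u) -> p = q.
Proof.
  destruct p as [p Hp], q as [q Hq]; simpl; intros H.
  assert (p = q) by (apply functional_extensionality; intro x; apply propositional_extensionality; auto).
  subst. f_equal. apply proof_irrelevance.
Qed.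

Lemma fr_ub (L : RawFrame) (Hf : is_frame L) I (f : I -> L) i : fle (f i) (fjoin I f).
Proof.
  destruct Hf as (Hr&Ht&Ha&Htop&Hm&Hj&Hd). apply (proj1 (Hj I f (fjoin I f)) (Hr _)).
Qed.

Definition E (L : RawFrame) (A : Type) (a : A) : A -> L :=
  fun b => @fjoin L (b = a) (fun _ => ftop).
Arguments E L {A} a _.

Lemma L1 (L : RawFrame) (Hf : is_frame L) A (P : fpow A L -> PropFrame) (HP : frame_hom P) :
  exists a, P (E L a).
Proof.
  destruct HP as [Ht [_ Hj]].
  pose proof Hf as (Hr&Htr&Ha&Htop&Hm&Hjj&Hd).
  assert (Heq : (@fjoin (fpow A L) A (fun a => E L a)) = @ftop (fpow A L)).
  { apply functional_extensionality; intro b. cbn. apply Ha.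
    - apply Htop.
    - eapply Htr; [| apply (fr_ub Hf (fun a => E L a b) b)]. unfold E.
      apply (fr_ub Hf (fun _ : b = b => ftop) eq_refl). }
  pose proof (Hj A (fun a => E L a)) as H. rewrite Heq, Ht in H.
  pose proof (eq_ind _ (fun X : PropFrame => X) I _ H) as HH. exact HH.
Qed.

Lemma L2 (L : RawFrame) (Hf : is_frame L) A (P : fpow A L -> PropFrame) (HP : frame_hom P) a b :
  P (E L a) -> P (E L b) -> a = b.
Proof.
  intros Ha' Hb'. destruct (classic (a = b)) as [|Hne]; [assumption|exfalso].
  destruct HP as [Ht [Hm Hj]].
  pose proof Hf as (Hr&Htr&Ha&Htop&Hmi&Hjj&Hd).
  assert (Heq : @fmeet (fpow A L) (E L a) (E L b) = @fjoin (fpow A L) False (fun i => match i with end)).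
  { apply functional_extensionality; intro c. cbn. apply Ha.
    - unfold E at 2. rewrite Hd. apply Hjj. intros Hcb.
      eapply Htr; [exact (proj1 (proj1 (Hmi _ _ _) (Hr _)))|].
      unfold E. apply Hjj. intros Hca. exfalso. apply Hne. congruence.
    - apply Hjj. intros []. }
  pose proof (Hm (E L a) (E L b)) as H. rewrite Heq, Hj in H.
  assert (HH : fmeet (P (E L a)) (P (E L b))) by (split; assumption).
  rewrite <- H in HH. destruct HH as [[]].
Qed.

Lemma L3 (L : RawFrame) (Hf : is_frame L) A (P : fpow A L -> PropFrame) (HP : frame_hom P) a :
  P (E L a) -> forall phi : A -> L, P phi <-> P (fun _ => phi a).
Proof.
  intros Hea phi. destruct HP as [Ht [Hm Hj]].
  pose proof Hf as (Hr&Htr&Ha&Htop&Hmi&Hjj&Hd).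
  assert (Heq : @fmeet (fpow A L) phi (E L a) = @fmeet (fpow A L) (fun _ => phi a) (E L a)).
  { apply functional_extensionality; intro c. cbn. unfold E. rewrite !Hd. f_equal.
    apply functional_extensionality; intro H. rewrite H. reflexivity. }
  pose proof (Hm phi (E L a)) as H1. pose proof (Hm (fun _ => phi a) (E L a)) as H2.
  rewrite Heq in H1. rewrite H1 in H2.
  split; intro H.
  - assert (HH : fmeet (P phi) (P (E L a))) by (split; auto). rewrite H2 in HH. apply HH.
  - assert (HH : fmeet (P (fun _ => phi a)) (P (E L a))) by (split; auto). rewrite <- H2 in HH. apply HH.
Qed.

Lemma point_E (L : RawFrame) (q : point L) A (a : A) : proj1_sig q (E L a a).
Proof.
  destruct (proj2_sig q) as [Ht [_ Hj]]. unfold E. rewrite Hj.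
  exists eq_refl. rewrite Ht. exact I.
Qed.

Lemma Phom (T : Monad) (L : RawFrame) (lop : LocOps T L) (HL : is_loc_comodel lop)
  A (t : T A) (p : point L) : @frame_hom (fpow A L) PropFrame (fun phi => proj1_sig p (lop A t phi)).
Proof.
  destruct HL as (_&Hh&_). exact (frame_hom_comp (Hh A t) (proj2_sig p)).
Qed.

Lemma char (T : Monad) (L : RawFrame) (lop : LocOps T L) (HL : is_loc_comodel lop)
  (pop : TopOps T (pt L)) (Hc : pt_compatible lop pop) A (t : T A) (p : point L) a0 (q0 : point L) :
  proj1_sig p (lop A t (E L a0)) ->
  (forall u, proj1_sig q0 u <-> proj1_sig p (lop A t (fun _ => u))) ->
  proj1_sig (pop A t) p = (a0, q0).
Proof.
  intros H0 H1.
  pose proof (Hc A t p) as Hc'.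
  destruct (proj1_sig (pop A t) p) as [a q] eqn:Hpq. simpl in Hc'.
  assert (a = a0).
  { apply (L2 (proj1 HL) (Phom HL A t p)); [|exact H0].
    apply (proj1 (Hc' (E L a))). apply point_E. }
  subst a. f_equal. apply point_ext. intro u.
  rewrite (Hc' (fun _ => u)). rewrite H1. tauto.
Qed.

Lemma compat_comodel (T : Monad) (L : RawFrame) (lop : LocOps T L) (HL : is_loc_comodel lop)
  (pop : TopOps T (pt L)) (Hc : pt_compatible lop pop) : is_top_comodel pop.
Proof.
  pose proof HL as (Hf&Hh&Hret&Hbind). split.
  - intros A a p. apply (char HL Hc).
    + rewrite Hret. apply point_E.
    + intro u. rewrite Hret. tauto.
  - intros A B t u p.
    destruct (proj1_sig (pop A t) p) as [a1 q1] eqn:H1. simpl.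
    destruct (proj1_sig (pop B (u a1)) q1) as [a2 q2] eqn:H2. simpl.
    pose proof (Hc A t p) as C1. rewrite H1 in C1. simpl in C1.
    pose proof (Hc B (u a1) q1) as C2. rewrite H2 in C2. simpl in C2.
    transitivity (a2, q2); [|symmetry; exact H2]. apply (char HL Hc).
    + rewrite Hbind. apply C1. apply C2. apply point_E.
    + intro v. rewrite Hbind. rewrite <- C1. rewrite <- C2. tauto.
Qed.

Definition pick (T : Monad) (L : RawFrame) (lop : LocOps T L) (HL : is_loc_comodel lop)
  A (t : T A) (p : point L) : A :=
  proj1_sig (constructive_indefinite_description _ (L1 (proj1 HL) (Phom HL A t p))).

Lemma pick_spec (T : Monad) (L : RawFrame) (lop : LocOps T L) (HL : is_loc_comodel lop)
  A (t : T A) (p : point L) : proj1_sig p (lop A t (E L (pick HL A t p))).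
Proof.
  unfold pick. exact (proj2_sig (constructive_indefinite_description _ (L1 (proj1 HL) (Phom HL A t p)))).
Qed.

Lemma const_hom (L : RawFrame) A : @frame_hom L (fpow A L) (fun u => fun _ : A => u).
Proof. split; [reflexivity| split; reflexivity]. Qed.

Definition qpt (T : Monad) (L : RawFrame) (lop : LocOps T L) (HL : is_loc_comodel lop)
  A (t : T A) (p : point L) : point L :=
  exist _ (fun u => proj1_sig p (lop A t (fun _ => u)))
    (frame_hom_comp (const_hom L A) (Phom HL A t p)).

Lemma pop_cont (T : Monad) (L : RawFrame) (lop : LocOps T L) (HL : is_loc_comodel lop)
  A (t : T A) :
  @continuous (pt L) (copow A (pt L)) (fun p => (pick HL A t p, qpt HL A t p)).
Proof.
  intros U HU.
  pose (phi := fun a => proj1_sig (constructive_indefinite_description _ (HU a))).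
  exists (lop A t phi). intros p.
  pose proof (proj2_sig (constructive_indefinite_description _ (HU (pick HL A t p))) (qpt HL A t p)) as Hs.
  simpl in Hs |- *. rewrite Hs. fold (phi (pick HL A t p)).
  symmetry. apply (L3 (proj1 HL) (Phom HL A t p) _ (pick_spec HL A t p)).
Qed.

Definition pop_c (T : Monad) (L : RawFrame) (lop : LocOps T L) (HL : is_loc_comodel lop)
  : TopOps T (pt L) := fun A t => exist _ _ (pop_cont HL t).

Lemma pop_c_compat (T : Monad) (L : RawFrame) (lop : LocOps T L) (HL : is_loc_comodel lop) :
  pt_compatible lop (pop_c HL).
Proof.
  intros A t p phi. simpl. symmetry.
  apply (L3 (proj1 HL) (Phom HL A t p) _ (pick_spec HL A t p)).
Qed.

Lemma opens_frame (X : Space) : is_frame (Opens X).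
Proof.
  split; [|split; [|split; [|split; [|split; [|split]]]]]; simpl.
  - auto.
  - auto.
  - intros U V H1 H2. apply opens_ext. split; auto.
  - auto.
  - intros U V W. split; [intros H; split; intros x Hx; apply (H x Hx)|intros [H1 H2] x Hx; auto].
  - intros I f z. split.
    + intros H i x Hx. apply H. exists i. exact Hx.
    + intros H x [i Hi]. exact (H i x Hi).
  - intros U I f. apply opens_ext. simpl. firstorder.
Qed.

Lemma O_obj (T : Monad) (X : Space) (op : TopOps T X) :
  is_top_comodel op -> is_loc_comodel (O_ops op).
Proof.
  intros [Hret Hbind]. split; [apply opens_frame|split; [|split]].
  - intros A t. split; [|split].
    + apply opens_ext. simpl. tauto.
    + intros x y. apply opens_ext. simpl. tauto.
    + intros I f. apply opens_ext. simpl. tauto.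
  - intros A a phi. apply opens_ext. intros x. unfold O_ops, Opre, glue. simpl.
    generalize (Hret A a x); simpl; intros HH; rewrite HH; simpl; tauto.
  - intros A B t u phi. apply opens_ext. intros x. unfold O_ops, Opre, glue. simpl.
    generalize (Hbind A B t u x); simpl; intros HH; rewrite HH; tauto.
Qed.

Lemma O_mor (T : Monad) (X Y : Space) (opX : TopOps T X) (opY : TopOps T Y) (h : cmap X Y) :
  is_top_comodel_map opX opY (proj1_sig h) ->
  is_loc_comodel_map (O_ops opX) (O_ops opY) (Opre h).
Proof.
  intros [_ Hm]. split; [split; [|split]|].
  - apply opens_ext. simpl. tauto.
  - intros x y. apply opens_ext. simpl. tauto.
  - intros I f. apply opens_ext. simpl. tauto.
  - intros A t phi. apply opens_ext. intros x. unfold O_ops, Opre, glue. simpl.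
    generalize (Hm A t x); simpl; intros HH; rewrite HH; simpl; tauto.
Qed.

Lemma pt_obj (T : Monad) (L : RawFrame) (lop : LocOps T L) :
  is_loc_comodel lop ->
  (exists pop : TopOps T (pt L), pt_compatible lop pop /\ is_top_comodel pop) /\
  (forall pop pop' : TopOps T (pt L),
      pt_compatible lop pop -> pt_compatible lop pop' ->
      forall (A : Type) (t : T A) (p : pt L),
        proj1_sig (pop A t) p = proj1_sig (pop' A t) p).
Proof.
  intros HL. split.
  - exists (pop_c HL). split; [apply pop_c_compat|apply (compat_comodel HL (pop_c_compat HL))].
  - intros pop pop' Hc Hc' A t p.
    destruct (proj1_sig (pop A t) p) as [a q] eqn:Hpq.
    pose proof (Hc A t p) as C. rewrite Hpq in C. simpl in C.
    symmetry. apply (char HL Hc').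
    + apply C. apply point_E.
    + intro u. apply (C (fun _ => u)).
Qed.

Lemma pt_mor (T : Monad) (L L' : RawFrame) (lop : LocOps T L) (lop' : LocOps T L')
          (pop : TopOps T (pt L)) (pop' : TopOps T (pt L'))
          (h : L' -> L) (Hh : frame_hom h) :
      is_loc_comodel lop -> is_loc_comodel lop' ->
      pt_compatible lop pop -> pt_compatible lop' pop' ->
      is_loc_comodel_map lop lop' h ->
      is_top_comodel_map pop pop' (ptmap Hh).
Proof.
  intros HL HL' Hc Hc' [_ Hm]. split.
  - intros U [u Hu]. exists (h u). intros p. apply (Hu (ptmap Hh p)).
  - intros A t p. destruct (proj1_sig (pop A t) p) as [a q] eqn:Hpq. simpl.
    pose proof (Hc A t p) as C. rewrite Hpq in C. simpl in C.
    apply (char HL' Hc').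
    + simpl. rewrite Hm. apply C.
      destruct Hh as [Ht [_ Hj]]. unfold E. rewrite Hj. rewrite Ht. apply point_E.
    + intro u. simpl. rewrite Hm. apply (C (fun _ => h u)).
Qed.

Lemma point_top (L : RawFrame) (q : point L) : proj1_sig q ftop.
Proof. destruct (proj2_sig q) as [Ht _]. rewrite Ht. exact I. Qed.
Lemma point_meet (L : RawFrame) (q : point L) u v :
  proj1_sig q (fmeet u v) <-> proj1_sig q u /\ proj1_sig q v.
Proof. destruct (proj2_sig q) as [_ [Hm _]]. rewrite Hm. simpl. tauto. Qed.
Lemma point_join (L : RawFrame) (q : point L) I (g : I -> L) :
  proj1_sig q (fjoin I g) <-> exists i, proj1_sig q (g i).
Proof. destruct (proj2_sig q) as [_ [_ Hj]]. rewrite Hj. simpl. tauto. Qed.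

Lemma transpose_hom (X : Space) (L : RawFrame) (f : cmap X (pt L)) : frame_hom (transpose f).
Proof.
  split; [|split].
  - apply opens_ext. intro x. simpl. split; [tauto|intros _; apply point_top].
  - intros u v. apply opens_ext. intro x. simpl. apply point_meet.
  - intros I g. apply opens_ext. intro x. simpl. apply point_join.
Qed.

Lemma adj_iff (T : Monad) (X : Space) (opX : TopOps T X) (L : RawFrame) (lop : LocOps T L)
          (pop : TopOps T (pt L)) :
      is_loc_comodel lop -> pt_compatible lop pop ->
      forall f : cmap X (pt L),
          is_top_comodel_map opX pop (proj1_sig f) <->
          is_loc_comodel_map (O_ops opX) lop (transpose f).
Proof.
  intros HL Hc f. split.
  - intros [_ Hm]. split; [apply transpose_hom|]. intros A t phi. apply opens_ext. intro x.
    unfold O_ops, Opre, glue, transpose. simpl.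
    generalize (Hc A t (proj1_sig f x) phi). generalize (Hm A t x). simpl. intros HH; rewrite HH.
    simpl. tauto.
  - intros [_ Hm]. split; [exact (proj2_sig f)|]. intros A t x.
    assert (K : forall phi, proj1_sig (proj1_sig f x) (lop A t phi) <->
      proj1_sig (proj1_sig f (snd (proj1_sig (opX A t) x))) (phi (fst (proj1_sig (opX A t) x)))).
    { intro phi. pose proof (f_equal (fun U => proj1_sig U x) (Hm A t phi)) as HH. cbv beta in HH.
      split; intro H; [exact (eq_ind _ (fun P:Prop => P) H _ HH) | exact (eq_ind _ (fun P:Prop => P) H _ (eq_sym HH))]. }
    apply (char HL Hc).
    + apply K. apply point_E.
    + intro u. rewrite K. simpl. tauto.
Qed.

Lemma gpoint (X : Space) (L : RawFrame) (g : L -> Opens X) (Hg : frame_hom g) (x : X) :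
  @frame_hom L PropFrame (fun u => proj1_sig (g u) x).
Proof.
  destruct Hg as [Ht [Hm Hj]]. split; [|split].
  - rewrite Ht. reflexivity.
  - intros u v. rewrite Hm. reflexivity.
  - intros I f. rewrite Hj. reflexivity.
Qed.

Definition gmap (X : Space) (L : RawFrame) (g : L -> Opens X) (Hg : frame_hom g) (x : X) : pt L :=
  exist _ (fun u => proj1_sig (g u) x) (gpoint Hg x).

Lemma gmap_cont (X : Space) (L : RawFrame) (g : L -> Opens X) (Hg : frame_hom g) :
  @continuous X (pt L) (gmap Hg).
Proof.
  intros U [u Hu].
  replace (fun x => U (gmap Hg x)) with (proj1_sig (g u)).
  - exact (proj2_sig (g u)).
  - apply functional_extensionality; intro x. apply propositional_extensionality.
    symmetry. apply (Hu (gmap Hg x)).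
Qed.

Theorem proposition2p9 (T : Monad) :
  (* O lifts on objects *)
  (forall (X : Space) (op : TopOps T X),
      is_top_comodel op -> is_loc_comodel (O_ops op)) /\
  (* O lifts on morphisms *)
  (forall (X Y : Space) (opX : TopOps T X) (opY : TopOps T Y) (h : cmap X Y),
      is_top_comodel opX -> is_top_comodel opY ->
      is_top_comodel_map opX opY (proj1_sig h) ->
      is_loc_comodel_map (O_ops opX) (O_ops opY) (Opre h)) /\
  (* pt lifts on objects: the induced structure exists, is unique, is a comodel *)
  (forall (L : RawFrame) (lop : LocOps T L),
      is_loc_comodel lop ->
      (exists pop : TopOps T (pt L), pt_compatible lop pop /\ is_top_comodel pop) /\
      (forall pop pop' : TopOps T (pt L),
          pt_compatible lop pop -> pt_compatible lop pop' ->
          forall (A : Type) (t : T A) (p : pt L),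
            proj1_sig (pop A t) p = proj1_sig (pop' A t) p)) /\
  (* pt lifts on morphisms *)
  (forall (L L' : RawFrame) (lop : LocOps T L) (lop' : LocOps T L')
          (pop : TopOps T (pt L)) (pop' : TopOps T (pt L'))
          (h : L' -> L) (Hh : frame_hom h),
      is_loc_comodel lop -> is_loc_comodel lop' ->
      pt_compatible lop pop -> pt_compatible lop' pop' ->
      is_loc_comodel_map lop lop' h ->
      is_top_comodel_map pop pop' (ptmap Hh)) /\
  (* the adjunction bijection restricts to comodel maps *)
  (forall (X : Space) (opX : TopOps T X) (L : RawFrame) (lop : LocOps T L)
          (pop : TopOps T (pt L)),
      is_top_comodel opX -> is_loc_comodel lop -> pt_compatible lop pop ->
      (forall f : cmap X (pt L),
          is_top_comodel_map opX pop (proj1_sig f) <->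
          is_loc_comodel_map (O_ops opX) lop (transpose f)) /\
      (forall g : L -> Opens X,
          is_loc_comodel_map (O_ops opX) lop g ->
          exists f : cmap X (pt L),
            is_top_comodel_map opX pop (proj1_sig f) /\
            forall (u : L) (x : X), proj1_sig (transpose f u) x <-> proj1_sig (g u) x)).
Proof.
  split; [|split; [|split; [|split]]].
  - intros X op H. apply O_obj; exact H.
  - intros X Y opX opY h _ _ H. apply O_mor; exact H.
  - intros L lop H. apply pt_obj; exact H.
  - intros. eapply pt_mor; eassumption.
  - intros X opX L lop pop _ HL Hc. split.
    + apply adj_iff; assumption.
    + intros g Hgm. pose proof (proj1 Hgm) as Hg.
      exists (exist _ (gmap Hg) (gmap_cont Hg)). split.
      * apply (adj_iff opX HL Hc).
        assert (Heq : transpose (exist _ (gmap Hg) (gmap_cont Hg)) = g).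
        { apply functional_extensionality; intro u. apply opens_ext. intro x. simpl. tauto. }
        rewrite Heq. exact Hgm.
      * intros u x. simpl. tauto.
Qed.
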